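(* Let $M\in\mathbb{R}^{n\times n}$ be symmetric with eigenvalues ordered so that $|\lambda_1|\ge|\lambda_2|\ge\cdots$, where $\lambda=\lambda_1>0$ and $\lambda_1>|\lambda_2|$. Let $u$ be the unit leading eigenvector and $l_2=|\lambda_2|/\lambda$. Let $0<\theta\le\frac1{40}(1-l_2)^{3/2}$, and let $Q\in\mathbb{R}^{n\times n}$ satisfy $\|Q-M\|_2\le\theta\|M\|_2$. Let $\nu\le1/20$, and let $x,x'\in\mathbb{R}^n$ satisfy: - $\|x\|=\|x'\|=1$; - $\langle u,x\rangle\ge0$ and $\langle u,x'\rangle\ge0$; - $\|\mathcal P_{u_\perp}(x)\|\le\nu$ and $\|\mathcal P_{u_\perp}(x')\|\le\nu$. Put $z=\mathcal P_{u_\perp}(x)$ and $z'=\mathcal P_{u_\perp}(x')$. Then $$\Big\|\mathcal P_{u_\perp}\Big(\frac{Qx}{\|Qx\|}-\frac{Qx'}{\|Qx'\|}\Big)\Big\|\le\big(l_2(1+3\nu^2)+3\theta\big)\|z-z'\|$$ and $$\Big\|\mathcal P_{u}\Big(\frac{Qx}{\|Qx\|}-\frac{Qx'}{\|Qx'\|}\Big)\Big\|\le(4\nu+4\theta)\|z-z'\|.$$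
   Context: $\mathcal P_u$ denotes the orthogonal projector onto the span of $u$, and $\mathcal P_{u_\perp}$ the orthogonal projector onto its orthogonal complement. $\|\cdot\|_2$ is the operator norm. *)

(* Defs.v *)
From mathcomp Require Import all_boot all_order all_algebra.
From mathcomp Require Import classical_sets reals exp.
Set Implicit Arguments. Unset Strict Implicit. Unset Printing Implicit Defensive.
Import Order.TTheory GRing.Theory Num.Theory.
Local Open Scope ring_scope.
Local Open Scope classical_set_scope.

Section Defs.
Variable R : realType.

Definition dotv n (x y : 'cV[R]_n) : R := (x^T *m y) ord0 ord0.
Definition vnorm n (x : 'cV[R]_n) : R := Num.sqrt (dotv x x).

(* orthogonal projector onto span(u) and onto its orthogonal complement
   (u is assumed to be a unit vector wherever these are used) *)
Definition proj_u n (u x : 'cV[R]_n) : 'cV[R]_n := dotv u x *: u.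
Definition proj_uperp n (u x : 'cV[R]_n) : 'cV[R]_n := x - proj_u u x.

Definition opnorm n (A : 'M[R]_n) : R :=
  sup [set vnorm (A *m v) | v in [set v : 'cV[R]_n | vnorm v = 1]].

Definition sorted_eigendecomp n (M P : 'M[R]_n) (d : 'rV[R]_n) : Prop :=
  P^T *m P = 1%:M /\ M = P *m diag_mx d *m P^T /\
  (forall i j : 'I_n, (i <= j)%N -> `|d ord0 j| <= `|d ord0 i|).
End Defs.

(* Main.v *)
Require Import Defs.
From mathcomp Require Import all_boot all_order all_algebra.
From mathcomp Require Import classical_sets reals exp.
From mathcomp Require Import ring lra.
Import Order.TTheory GRing.Theory Num.Theory.
Local Open Scope ring_scope.
Set Implicit Arguments. Unset Strict Implicit.

Section Vec.
Variable R : realType.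
Variable k : nat.
Implicit Types x y z : 'cV[R]_k.

Lemma dotvE x y : dotv x y = \sum_i x i ord0 * y i ord0.
Proof. by rewrite /dotv mxE; apply: eq_bigr => i _; rewrite mxE. Qed.

Lemma dotvC x y : dotv x y = dotv y x.
Proof. by rewrite !dotvE; apply: eq_bigr => i _; rewrite mulrC. Qed.

Lemma dotvDr x y z : dotv x (y + z) = dotv x y + dotv x z.
Proof. by rewrite /dotv mulmxDr mxE. Qed.
Lemma dotvDl x y z : dotv (y + z) x = dotv y x + dotv z x.
Proof. by rewrite dotvC dotvDr !(dotvC x). Qed.
Lemma dotvZr a x y : dotv x (a *: y) = a * dotv x y.
Proof. by rewrite /dotv -scalemxAr mxE. Qed.
Lemma dotvZl a x y : dotv (a *: y) x = a * dotv y x.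
Proof. by rewrite dotvC dotvZr dotvC. Qed.
Lemma dotvNr x y : dotv x (- y) = - dotv x y.
Proof. by rewrite -scaleN1r dotvZr mulN1r. Qed.
Lemma dotvNl x y : dotv (- y) x = - dotv y x.
Proof. by rewrite dotvC dotvNr dotvC. Qed.
Lemma dotvBr x y z : dotv x (y - z) = dotv x y - dotv x z.
Proof. by rewrite dotvDr dotvNr. Qed.
Lemma dotvBl x y z : dotv (y - z) x = dotv y x - dotv z x.
Proof. by rewrite dotvDl dotvNl. Qed.
Lemma dotv0r x : dotv x 0 = 0.
Proof. by rewrite /dotv mulmx0 mxE. Qed.

Lemma dotv_ge0 x : 0 <= dotv x x.
Proof. by rewrite dotvE; apply: sumr_ge0 => i _; rewrite -expr2 sqr_ge0. Qed.

Lemma dotv_mulmx (A : 'M[R]_k) x y : dotv (A *m x) y = dotv x (A^T *m y).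
Proof. by rewrite /dotv trmx_mul mulmxA. Qed.

Lemma vnorm_ge0 x : 0 <= vnorm x.
Proof. exact: sqrtr_ge0. Qed.
Lemma vnorm_sq x : vnorm x ^+ 2 = dotv x x.
Proof. by rewrite /vnorm sqr_sqrtr // dotv_ge0. Qed.

Lemma cs_scalar (p q s : R) : 0 <= q -> (forall t, 0 <= p + 2*t*s + t^+2*q) -> s^+2 <= p*q.
Proof.
move=> q0 H; have [q00|qn0] := eqVneq q 0.
  rewrite q00 in H *.
  have [->|sn0] := eqVneq s 0; first by rewrite mulr0 expr2 mulr0.
  have := H (- (p+1) / (2*s)); rewrite mulr0 addr0.
  have -> : 2 * (- (p + 1) / (2 * s)) * s = - (p+1) by field; rewrite sn0.
  lra.
have qp : 0 < q by rewrite lt_def qn0 q0.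
have := H (- s / q).
have -> : p + 2 * (- s / q) * s + (- s / q) ^+ 2 * q = p - s^+2/q by field.
move=> h; have : s^+2 / q <= p by lra.
by rewrite ler_pdivrMr // .
Qed.

Lemma dot_quad x y t : dotv (x + t *: y) (x + t *: y) = dotv x x + 2*t*dotv x y + t^+2 * dotv y y.
Proof. rewrite !dotvDl !dotvDr !dotvZl !dotvZr (dotvC y x). ring. Qed.

Lemma cs x y : `|dotv x y| <= vnorm x * vnorm y.
Proof.
have hq : forall t, 0 <= dotv x x + 2*t*dotv x y + t^+2 * dotv y y.
  by move=> t; rewrite -dot_quad dotv_ge0.
have h := @cs_scalar (dotv x x) (dotv y y) (dotv x y) (dotv_ge0 y) hq.
have a := vnorm_ge0 x; have b := vnorm_ge0 y.
rewrite -!vnorm_sq in h.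
have : `|dotv x y| ^+2 <= (vnorm x * vnorm y)^+2 by rewrite real_normK ?num_real // exprMn.
move=> h2; have c0 : 0 <= vnorm x * vnorm y by rewrite mulr_ge0.
have t0 := normr_ge0 (dotv x y).
move: h2 c0 t0; generalize (vnorm x * vnorm y) `|dotv x y| => c t; nra.
Qed.

Lemma sq_le (a c : R) : 0 <= a -> 0 <= c -> a^+2 <= c^+2 -> a <= c.
Proof. move=> a0 c0 h; nra. Qed.

Lemma sq_mono (t c : R) : 0 <= t -> t <= c -> t^+2 <= c^+2.
Proof. move=> t0 h; nra. Qed.

Lemma vnorm_le x c : 0 <= c -> dotv x x <= c^+2 -> vnorm x <= c.
Proof. by move=> c0 h; apply: sq_le => //; [exact: vnorm_ge0| rewrite vnorm_sq]. Qed.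

Lemma vnorm_tri x y : vnorm (x + y) <= vnorm x + vnorm y.
Proof.
apply: vnorm_le; first by rewrite addr_ge0 // vnorm_ge0.
rewrite dotvDl !dotvDr (dotvC y x) -!vnorm_sq.
have := cs x y; have := ler_norm (dotv x y).
have := vnorm_ge0 x; have := vnorm_ge0 y. nra.
Qed.

Lemma vnormZ a x : vnorm (a *: x) = `|a| * vnorm x.
Proof.
by rewrite /vnorm dotvZl dotvZr mulrA -expr2 sqrtrM ?sqr_ge0 // sqrtr_sqr.
Qed.

Lemma vnormN x : vnorm (- x) = vnorm x.
Proof. by rewrite /vnorm dotvNl dotvNr opprK. Qed.

Lemma vnormB x y : vnorm (x - y) = vnorm (y - x).
Proof. by rewrite -vnormN opprB. Qed.

Lemma vnorm_triB x y : vnorm (x - y) <= vnorm x + vnorm y.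
Proof. by rewrite -(vnormN y) vnorm_tri. Qed.

Variable u : 'cV[R]_k.
Hypothesis hu : dotv u u = 1.

Lemma vnorm_u : vnorm u = 1.
Proof. by rewrite /vnorm hu sqrtr1. Qed.

Lemma dotu_le x : `|dotv u x| <= vnorm x.
Proof. by have := cs u x; rewrite vnorm_u mul1r. Qed.

Lemma perp_dot x : dotv u (proj_uperp u x) = 0.
Proof. by rewrite /proj_uperp /proj_u dotvBr dotvZr hu mulr1 subrr. Qed.

Lemma decomp x : x = dotv u x *: u + proj_uperp u x.
Proof. by rewrite /proj_uperp /proj_u addrC subrK. Qed.

Lemma pyth x : dotv x x = (dotv u x)^+2 + dotv (proj_uperp u x) (proj_uperp u x).
Proof.
have hp := perp_dot x.
move: hp; set p := proj_uperp u x; set a := dotv u x => hp.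
have -> : x = a *: u + p by rewrite /p /a -decomp.
clearbody p a.
rewrite dotvDl !dotvDr !dotvZl !dotvZr hu (dotvC p u) hp; ring.
Qed.

Lemma vnorm_perp_le x : vnorm (proj_uperp u x) <= vnorm x.
Proof.
apply: vnorm_le; first exact: vnorm_ge0.
by rewrite vnorm_sq (pyth x) lerDr sqr_ge0.
Qed.

Lemma vnorm_proj_u x : vnorm (proj_u u x) = `|dotv u x|.
Proof. by rewrite /proj_u vnormZ vnorm_u mulr1. Qed.

Lemma perpD x y : proj_uperp u (x + y) = proj_uperp u x + proj_uperp u y.
Proof. rewrite /proj_uperp /proj_u dotvDr scalerDl. by rewrite opprD addrACA. Qed.

Lemma perpZ a x : proj_uperp u (a *: x) = a *: proj_uperp u x.
Proof. by rewrite /proj_uperp /proj_u dotvZr scalerBr scalerA. Qed.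

Lemma perpN x : proj_uperp u (- x) = - proj_uperp u x.
Proof. by rewrite -scaleN1r perpZ scaleN1r. Qed.

Lemma perpB x y : proj_uperp u (x - y) = proj_uperp u x - proj_uperp u y.
Proof. by rewrite perpD perpN. Qed.

Lemma perp_u0 x : dotv u x = 0 -> proj_uperp u x = x.
Proof. by move=> h; rewrite /proj_uperp /proj_u h scale0r subr0. Qed.

Lemma perp_u a : proj_uperp u (a *: u) = 0.
Proof. by rewrite /proj_uperp /proj_u dotvZr hu mulr1 subrr. Qed.
End Vec.

Section Sc.
Variable R : realFieldType.
Lemma poly_perp (l nu th : R) : 0 <= l -> l <= 1 -> 0 <= nu -> nu <= 20^-1 -> 0 < th -> th <= 40^-1 ->
  (l+ 101/100*th)*(1 - nu^+2 - th)^+2 + (l*nu+th)*(nu + 101/100*th*((1 - nu^+2 - th)+1))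
   <= (l*(1+3*nu^+2)+3*th)* (1 - nu^+2 - th)^+3.
Proof.
move=> l0 l1 n0 n1 t0 t1.
set s := nu^+2 + th.
have s0 : 0 <= s by rewrite /s; nra.
have s1 : s <= 11/400 by rewrite /s; nra.
have -> : 1 - nu^+2 - th = 1 - s by rewrite /s; field.
have hb : (l*(1+3*nu^+2)+3*th)*(1-s) - l - 101/100*th >= 19/10*(l*nu^+2) + 9/10*th.
  have e : (l*(1+3*nu^+2)+3*th)*(1-s) - l - 101/100*th
     = 2*(l*nu^+2) + 199/100*th - l*th - s*(3*(l*nu^+2)+3*th) by rewrite /s; field.
  rewrite e.
  have lt : l*th <= th by nra.
  have ln0 : 0 <= l*nu^+2 by nra.
  have : s*(3*(l*nu^+2)+3*th) <= 11/400*(3*(l*nu^+2)+3*th) by nra.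
  lra.
have hm : 9/10 <= (1-s)^+2 by nra.
have ln0 : 0 <= l*nu^+2 by nra.
have h1 : 9/10 * (19/10*(l*nu^+2) + 9/10*th) <= (1-s)^+2 * ((l*(1+3*nu^+2)+3*th)*(1-s) - l - 101/100*th).
  apply: ler_pM; lra.
have h2 : (l*nu+th)*(nu + 101/100*th*((1 - s)+1)) <= l*nu^+2 + 1/4*th.
  have e : (l*nu+th)*(nu + 101/100*th*((1 - s)+1)) = l*nu^+2 + (l*nu)*(101/100*th*(2-s)) + th*nu + th*(101/100*th*(2-s)) by field.
  rewrite e.
  have a1 : (l*nu)*(101/100*th*(2-s)) <= 1/20 * (101/100*th*2).
    apply: ler_pM; nra.
  have a2 : th*(101/100*th*(2-s)) <= th * (101/100*(1/40)*2).
    apply: ler_wpM2l; nra.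
  have a3 : th * nu <= th * (1/20) by apply: ler_wpM2l; lra.
  lra.
have e : (l*(1+3*nu^+2)+3*th)* (1 - s)^+3 - (l+ 101/100*th)*(1 - s)^+2
    = (1-s)^+2 * ((l*(1+3*nu^+2)+3*th)*(1-s) - l - 101/100*th) by field.
lra.
Qed.

Lemma K_bound (La nu th D X r r' K : R) :
  0 < La -> 0 <= nu -> nu <= 20^-1 -> 0 < th -> th <= 40^-1 ->
  0 <= D -> 0 <= X ->
  La * (1 - nu^+2 - th) <= r -> La * (1 - nu^+2 - th) <= r' ->
  K * (r + r') <= 2*nu*La^+2*D + 2*th*La^+2*X + th*La*X*(r+r') ->
  K <= La * ((nu*D + th*X)/(1 - nu^+2 - th) + th*X).
Proof.
move=> L0 n0 n1 t0 t1 D0 X0 hr hr' hK.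
move: hr hr'; set m := 1 - nu^+2 - th => hr hr'.
have m0 : 97/100 <= m by rewrite /m; nra.
have mp : 0 < m by lra.
set q := nu*D + th*X.
have q0 : 0 <= q by rewrite /q; nra.
  have [Ks|Kl] := lerP K (th*La*X).
    have : 0 <= La * (q/m) by apply: mulr_ge0; [lra| apply: divr_ge0; lra].
    nra.
  have e1 : (K - th*La*X)*(r+r') <= 2*La^+2*q by rewrite /q; nra.
  have e2 : (K - th*La*X)*(2*La* m) <= 2*La^+2*q by nra.
  have e3 : (K - th*La*X)* m <= La*q.
    have : 2*La*((K - th*La*X)* m) <= 2*La*(La*q) by nra.
    by rewrite ler_pM2l; lra.
  have e4 : K - th*La*X <= La*q/m by rewrite ler_pdivlMr.
  have -> : La * (q / m + th * X) = La*q/m + th*La*X by field; lra.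
  lra.
Qed.

Lemma perp_final (La l nu th D X r r' P1 P2 K : R) :
  0 < La -> 0 <= l -> l <= 1 -> 0 <= nu -> nu <= 20^-1 -> 0 < th -> th <= 40^-1 ->
  0 <= D -> 0 <= X -> X <= 101/100 * D ->
  La * (1 - nu^+2 - th) <= r -> La * (1 - nu^+2 - th) <= r' ->
  0 <= P1 -> P1 <= l*La*D + th*La*X -> 0 <= P2 -> P2 <= l*La*nu + th*La ->
  0 <= K -> K * (r + r') <= 2*nu*La^+2*D + 2*th*La^+2*X + th*La*X*(r+r') ->
  P1 / r + K / (r * r') * P2 <= (l*(1+3*nu^+2)+3*th)*D.
Proof.
move=> L0 l0 l1 n0 n1 t0 t1 D0 X0 XD hr hr' p10 p1 p20 p2 K0 hK.
have hp := @poly_perp l nu th l0 l1 n0 n1 t0 t1.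
move: hp hr hr'; set m := 1 - nu^+2 - th => hp hr hr'.
have m0 : 97/100 <= m by rewrite /m; nra.
have mp : 0 < m by lra.
have rp : 0 < r by nra.
have rp' : 0 < r' by nra.
set q := nu*D + th*X.
have q0 : 0 <= q by rewrite /q; nra.
have hKb : K <= La * (q/m + th*X) by apply: (@K_bound La nu th D X r r' K).
set Kb := q/m + th*X.
have Kb0 : 0 <= Kb by rewrite /Kb; apply: addr_ge0; [apply: divr_ge0|]; nra.
have s1 : P1 / r <= (l*D + th*X)/m.
  rewrite ler_pdivrMr //.
  have -> : (l * D + th * X) / m * r = (l*D + th*X) * (r/m) by field; lra.
  have : La <= r/m by rewrite ler_pdivlMr //; lra.
  have : 0 <= l*D + th*X by nra.
  nra.
have s2 : K / (r * r') * P2 <= Kb*(l*nu+th)/m^+2.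
  rewrite mulrAC ler_pdivrMr; last by apply: mulr_gt0.
  have h1 : K*P2 <= (La*Kb)*(La*(l*nu+th)) by apply: ler_pM => //; nra.
  have h2 : La^+2 <= r*r'/m^+2.
    rewrite ler_pdivlMr; last by apply: exprn_gt0.
    have -> : La^+2 * m^+2 = (La* m)*(La* m) by ring.
    apply: ler_pM; nra.
  have h3 : 0 <= Kb*(l*nu+th) by nra.
  have -> : Kb * (l * nu + th) / m ^+ 2 * (r * r') = Kb*(l*nu+th) * (r*r'/m^+2) by field; lra.
  nra.
have s3 : (l*D + th*X)/m + Kb*(l*nu+th)/m^+2
   <= D * (((l+ 101/100*th)* m^+2 + (l*nu+th)*(nu + 101/100*th*(m+1)))/m^+3).
  have -> : (l*D + th*X)/m + Kb*(l*nu+th)/m^+2 = ((l*D + th*X)* m^+2 + (q + th*X* m)*(l*nu+th))/m^+3.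
    by rewrite /Kb; field; lra.
  rewrite mulrA ler_pM2r; last by rewrite invr_gt0; apply: exprn_gt0.
  rewrite /q.
  have tX : th*X <= th*(101/100*D) by apply: ler_wpM2l; lra.
  have : th*X* m <= th*(101/100*D)* m by apply: ler_wpM2r => //; lra.
  have : 0 <= l*nu + th by nra.
  have : 0 <= m^+2 by nra.
  nra.
have s4 : ((l+ 101/100*th)* m^+2 + (l*nu+th)*(nu + 101/100*th*(m+1)))/m^+3 <= l*(1+3*nu^+2)+3*th.
  by rewrite ler_pdivrMr; [lra| apply: exprn_gt0].
have : D * (((l+ 101/100*th)* m^+2 + (l*nu+th)*(nu + 101/100*th*(m+1)))/m^+3) <= D*(l*(1+3*nu^+2)+3*th).
  by apply: ler_wpM2l.
lra.
Qed.
Lemma u_final (La nu th D X r r' U1 U2 K : R) :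
  0 < La -> 0 <= nu -> nu <= 20^-1 -> 0 < th -> th <= 40^-1 ->
  0 <= D -> 0 <= X -> X <= 101/100 * D ->
  La * (1 - nu^+2 - th) <= r -> La * (1 - nu^+2 - th) <= r' ->
  0 <= U1 -> U1 <= La * (101/100 * nu * D) + th*La*X -> 0 <= U2 -> U2 <= r' ->
  0 <= K -> K * (r + r') <= 2*nu*La^+2*D + 2*th*La^+2*X + th*La*X*(r+r') ->
  U1 / r + K / (r * r') * U2 <= (4*nu + 4*th)*D.
Proof.
move=> L0 n0 n1 t0 t1 D0 X0 XD hr hr' u10 u1 u20 u2 K0 hK.
have hKb := @K_bound La nu th D X r r' K L0 n0 n1 t0 t1 D0 X0 hr hr' hK.
move: hKb hr hr'; set m := 1 - nu^+2 - th => hKb hr hr'.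
have m0 : 97/100 <= m by rewrite /m; nra.
have mp : 0 < m by lra.
have rp : 0 < r by nra.
have rp' : 0 < r' by nra.
have s0 : K / (r * r') * U2 <= K / r.
  have -> : K/(r*r')*U2 = K/r * (U2/r') by field; lra.
  rewrite -[X in _ <= X]mulr1; apply: ler_wpM2l; first by apply: divr_ge0; lra.
  by rewrite ler_pdivrMr // mul1r.
have s1 : U1 / r <= (101/100 * nu * D + th*X)/m.
  rewrite ler_pdivrMr //.
  have -> : (101/100 * nu * D + th*X)/m * r = (101/100 * nu * D + th*X) * (r/m) by field; lra.
  have : La <= r/m by rewrite ler_pdivlMr //; lra.
  have : 0 <= 101/100 * nu * D + th*X by nra.
  nra.
have s2 : K / r <= ((nu*D + th*X)/m + th*X)/m.
  rewrite ler_pdivrMr //.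
  have -> : ((nu*D + th*X)/m + th*X)/m * r = ((nu*D + th*X)/m + th*X) * (r/m) by field; lra.
  have : La <= r/m by rewrite ler_pdivlMr //; lra.
  have : 0 <= (nu*D + th*X)/m + th*X by apply: addr_ge0; [apply: divr_ge0|]; nra.
  nra.
have im : m^-1 <= 104/100.
  rewrite -(@ler_pM2l _ m) // mulfV; [lra | by apply: lt0r_neq0].
have im0 : 0 <= m^-1 by rewrite invr_ge0; lra.
have tX : th*X <= th*(101/100*D) by apply: ler_wpM2l; lra.
have e1 : (101/100 * nu * D + th*X)/m <= (101/100 * nu * D + th*(101/100*D))*(104/100).
  apply: ler_pM => //; nra.
have e2 : ((nu*D + th*X)/m + th*X)/m <= ((nu*D + th*(101/100*D))*(104/100) + th*(101/100*D))*(104/100).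
  apply: ler_pM => //; first by apply: addr_ge0; [apply: divr_ge0|]; nra.
  apply: lerD => //; apply: ler_pM => //; nra.
have : 0 <= nu * D by nra.
have : 0 <= th * D by nra.
nra.
Qed.

End Sc.

Section Bform.
Variable R : realType.
Variable k : nat.
Variable M : 'M[R]_k.
Variable La : R.
Hypothesis hMn : forall v, dotv (M *m v) (M *m v) <= La^+2 * dotv v v.

Definition Bf (v w : 'cV[R]_k) := La^+2 * dotv v w - dotv (M *m v) (M *m w).

Lemma Bf_quad v w t : Bf (v + t *: w) (v + t *: w) = Bf v v + 2*t*Bf v w + t^+2 * Bf w w.
Proof.
rewrite /Bf mulmxDr -scalemxAr !dotvDl !dotvDr !dotvZl !dotvZr (dotvC w v) (dotvC (M *m w) (M *m v)).
ring.
Qed.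

Lemma Bf_ge0 v : 0 <= Bf v v.
Proof. by rewrite /Bf subr_ge0 hMn. Qed.

Lemma Bf_le v : Bf v v <= La^+2 * vnorm v ^+ 2.
Proof. by rewrite /Bf vnorm_sq lerBlDr lerDl dotv_ge0. Qed.

Lemma Bf_bound v w : `|Bf v w| <= La^+2 * (vnorm v * vnorm w).
Proof.
have hq : forall t, 0 <= Bf v v + 2*t*Bf v w + t^+2 * Bf w w.
  by move=> t; rewrite -Bf_quad Bf_ge0.
have h := @cs_scalar R (Bf v v) (Bf w w) (Bf v w) (Bf_ge0 w) hq.
have h1 := Bf_le v; have h2 := Bf_le w; have g1 := Bf_ge0 v; have g2 := Bf_ge0 w.
apply: sq_le; first exact: normr_ge0.
  by rewrite mulr_ge0 ?sqr_ge0 // mulr_ge0 // vnorm_ge0.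
rewrite real_normK ?num_real //.
apply: (le_trans h).
have -> : (La ^+ 2 * (vnorm v * vnorm w)) ^+ 2 = (La^+2 * vnorm v ^+2) * (La^+2 * vnorm w ^+ 2) by ring.
by apply: ler_pM.
Qed.
End Bform.

Section Eig.
Variable R : realType.
Variable n : nat.
Variables (M P : 'M[R]_n.+2) (d : 'rV[R]_n.+2) (u : 'cV[R]_n.+2).
Hypothesis hsym : M^T = M.
Hypothesis hed : sorted_eigendecomp M P d.
Hypothesis hd0 : 0 < d ord0 ord0.
Hypothesis hd1 : `|d ord0 (lift ord0 ord0)| < d ord0 ord0.
Hypothesis hu : dotv u u = 1.
Hypothesis hMu : M *m u = d ord0 ord0 *: u.

Lemma PtP : P^T *m P = 1%:M. Proof. by case: hed. Qed.
Lemma PPt : P *m P^T = 1%:M. Proof. exact: mulmx1C PtP. Qed.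
Lemma Mdef : M = P *m diag_mx d *m P^T. Proof. by case: hed => _ []. Qed.
Lemma dsort : forall i j : 'I_n.+2, (i <= j)%N -> `|d ord0 j| <= `|d ord0 i|.
Proof. by case: hed => _ []. Qed.

Lemma dotP (w : 'cV[R]_n.+2) : dotv (P *m w) (P *m w) = dotv w w.
Proof. by rewrite dotv_mulmx mulmxA PtP mul1mx. Qed.

Lemma dotPt (w : 'cV[R]_n.+2) : dotv (P^T *m w) (P^T *m w) = dotv w w.
Proof. by rewrite dotv_mulmx trmxK mulmxA PPt mul1mx. Qed.

Lemma MvE (v : 'cV[R]_n.+2) : M *m v = P *m (diag_mx d *m (P^T *m v)).
Proof. by rewrite Mdef !mulmxA. Qed.

Lemma dotD (c : 'cV[R]_n.+2) : dotv (diag_mx d *m c) (diag_mx d *m c) = \sum_i (d ord0 i)^+2 * (c i ord0)^+2.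
Proof. by rewrite dotvE; apply: eq_bigr => i _; rewrite mul_diag_mx mxE; ring. Qed.

Lemma dotsum (c : 'cV[R]_n.+2) : dotv c c = \sum_i (c i ord0)^+2.
Proof. by rewrite dotvE; apply: eq_bigr => i _; rewrite expr2. Qed.

Lemma Mn_le (v : 'cV[R]_n.+2) : dotv (M *m v) (M *m v) <= (d ord0 ord0)^+2 * dotv v v.
Proof.
rewrite MvE dotP dotD -(dotPt v) dotsum mulr_sumr.
apply: ler_sum => i _; apply: ler_wpM2r; first exact: sqr_ge0.
have := @dsort ord0 i (leq0n i) => h.
have e1 := real_normK (num_real (d ord0 i)); have e2 := real_normK (num_real (d ord0 ord0)).
have a := normr_ge0 (d ord0 i).
rewrite -e1 -e2; nra.
Qed.

Let b := P^T *m u.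

Lemma Db : diag_mx d *m b = d ord0 ord0 *: b.
Proof.
have := congr1 (mulmx P^T) hMu.
by rewrite MvE !mulmxA PtP mul1mx -scalemxAr.
Qed.

Lemma b_zero i : i != ord0 -> b i ord0 = 0.
Proof.
move=> hi.
have := congr1 (fun A : 'cV[R]_n.+2 => A i ord0) Db.
rewrite mul_diag_mx mxE [X in _ = X]mxE => e.
have hle : `|d ord0 i| <= `|d ord0 (lift ord0 ord0)|.
  apply: dsort; rewrite /= /bump /=; by rewrite lt0n.
have hne : d ord0 i != d ord0 ord0.
  apply/eqP => h; move: hle; rewrite h ger0_norm ?(ltW hd0) // => hle.
  by move: (lt_le_trans hd1 hle); rewrite ltxx.
have : (d ord0 i - d ord0 ord0) * b i ord0 = 0 by rewrite mulrBl e subrr.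
by move/eqP; rewrite mulf_eq0 subr_eq0 (negbTE hne) /= => /eqP.
Qed.

Lemma ub : u = P *m b.
Proof. by rewrite /b mulmxA PPt mul1mx. Qed.

Lemma dot_b (c : 'cV[R]_n.+2) : dotv b c = b ord0 ord0 * c ord0 ord0.
Proof.
rewrite dotvE (bigD1 ord0) //= big1 ?addr0 // => i hi.
by rewrite b_zero // mul0r.
Qed.

Lemma b0_ne0 : b ord0 ord0 != 0.
Proof.
apply/eqP => h.
have := dotPt u; rewrite -/b hu dot_b h mul0r => /eqP.
by rewrite eq_sym oner_eq0.
Qed.

Lemma Mperp_le (z : 'cV[R]_n.+2) : dotv u z = 0 ->
  dotv (M *m z) (M *m z) <= (d ord0 (lift ord0 ord0))^+2 * dotv z z.
Proof.
move=> hz.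
set c := P^T *m z.
have c0 : c ord0 ord0 = 0.
  have : dotv u z = dotv b c by rewrite ub dotv_mulmx.
  rewrite hz dot_b => /esym/eqP; rewrite mulf_eq0 (negbTE b0_ne0) /= => /eqP //.
rewrite MvE dotP dotD -(dotPt z) -/c dotsum mulr_sumr.
apply: ler_sum => i _.
have [->|hi] := eqVneq i ord0.
  by rewrite c0 expr0n /= !mulr0.
apply: ler_wpM2r; first exact: sqr_ge0.
have h : `|d ord0 i| <= `|d ord0 (lift ord0 ord0)|.
  apply: dsort; rewrite /= /bump /=; by rewrite lt0n.
have e1 := real_normK (num_real (d ord0 i)); have e2 := real_normK (num_real (d ord0 (lift ord0 ord0))).
have a := normr_ge0 (d ord0 i).
rewrite -e1 -e2; nra.
Qed.

Lemma Mu_perp (z : 'cV[R]_n.+2) : dotv u z = 0 -> dotv u (M *m z) = 0.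
Proof.
move=> hz; rewrite dotvC dotv_mulmx hsym hMu dotvZr dotvC hz mulr0 //.
Qed.
End Eig.

Section Op.
Variable R : realType.
Variable k : nat.
Implicit Types (A : 'M[R]_k) (v w : 'cV[R]_k).

Lemma coord_le1 w i : vnorm w = 1 -> `|w i ord0| <= 1.
Proof.
move=> hw.
have : dotv w w = 1 by rewrite -vnorm_sq hw expr1n.
rewrite dotvE (bigD1 i) //= => e.
have : 0 <= \sum_(j | j != i) w j ord0 * w j ord0.
  by apply: sumr_ge0 => j _; rewrite -expr2 sqr_ge0.
have := normr_ge0 (w i ord0); have := real_normK (num_real (w i ord0)).
rewrite expr2 => e2 a b; nra.
Qed.

Definition opK A := \sum_i (\sum_j `|A i j|)^+2.

Lemma opK_bound A w : vnorm w = 1 -> vnorm (A *m w) <= Num.sqrt (opK A).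
Proof.
move=> hw; apply: vnorm_le; first exact: sqrtr_ge0.
rewrite sqr_sqrtr; last by apply: sumr_ge0 => i _; exact: sqr_ge0.
rewrite dotvE /opK; apply: ler_sum => i _; rewrite mxE -expr2.
have h : `|\sum_j A i j * w j ord0| <= \sum_j `|A i j|.
  apply: (le_trans (ler_norm_sum _ _ _)); apply: ler_sum => j _.
  rewrite normrM -[X in _ <= X]mulr1; apply: ler_wpM2l; first exact: normr_ge0.
  exact: coord_le1.
rewrite -[X in X <= _]real_normK ?num_real //.
by apply: sq_mono => //; exact: normr_ge0.
Qed.

Variable w0 : 'cV[R]_k.
Hypothesis hw0 : vnorm w0 = 1.

Lemma opS_sup A : has_sup [set vnorm (A *m v) | v in [set v : 'cV[R]_k | vnorm v = 1]].
Proof.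
split; first by exists (vnorm (A *m w0)); exists w0.
exists (Num.sqrt (opK A)) => y [v hv <-]; exact: opK_bound.
Qed.

Lemma op_ub A v : vnorm v = 1 -> vnorm (A *m v) <= opnorm A.
Proof. by move=> hv; apply: (sup_upper_bound (opS_sup A)); exists v. Qed.

Lemma opnorm_le A c : (forall v, vnorm v = 1 -> vnorm (A *m v) <= c) -> opnorm A <= c.
Proof.
move=> h; apply: ge_sup; first by exists (vnorm (A *m w0)); exists w0.
by move=> y [v hv <-]; apply: h.
Qed.

Lemma vnorm0 v : vnorm v = 0 -> v = 0.
Proof.
move=> h.
have e : dotv v v = 0 by rewrite -vnorm_sq h expr0n.
move: e; rewrite dotvE => e.
have h0 : forall i : 'I_k, true -> 0 <= v i ord0 * v i ord0 by move=> i _; rewrite -expr2 sqr_ge0.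
have := psumr_eq0P h0 e => hi.
apply/matrixP => i j; rewrite (ord1 j) mxE.
by have /eqP := hi i isT; rewrite mulf_eq0 orbb => /eqP.
Qed.

Lemma op_bound A v : vnorm (A *m v) <= opnorm A * vnorm v.
Proof.
have [h0|hn] := eqVneq (vnorm v) 0.
  by rewrite (vnorm0 h0) mulmx0 /vnorm dotv0r sqrtr0 mulr0.
have vp : 0 < vnorm v by rewrite lt_def hn vnorm_ge0.
have hu : vnorm ((vnorm v)^-1 *: v) = 1.
  by rewrite vnormZ ger0_norm ?invr_ge0 ?vnorm_ge0 // mulVf.
have := op_ub A hu; rewrite -scalemxAr vnormZ ger0_norm ?invr_ge0 ?vnorm_ge0 //.
by rewrite mulrC ler_pdivrMr.
Qed.

End Op.

Section Main.
Variable R : realType.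
Variable k : nat.
Variables (M E : 'M[R]_k) (u x x' : 'cV[R]_k) (La l th nu : R).
Hypothesis hu : dotv u u = 1.
Hypothesis hsym : M^T = M.
Hypothesis hMu : M *m u = La *: u.

Lemma Mu_dot v : dotv u (M *m v) = La * dotv u v.
Proof. by rewrite dotvC dotv_mulmx hsym hMu dotvZr dotvC. Qed.

Lemma Mperp_norm z : 0 < La -> 0 <= l ->
  (forall z, dotv u z = 0 -> dotv (M *m z) (M *m z) <= (l*La)^+2 * dotv z z) ->
  dotv u z = 0 -> vnorm (M *m z) <= l * La * vnorm z.
Proof.
move=> L0 l0 hMp hz; apply: vnorm_le.
  by apply: mulr_ge0; [apply: mulr_ge0; [exact: l0 | exact: ltW L0] | exact: vnorm_ge0].
by rewrite exprMn vnorm_sq; apply: hMp.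
Qed.

Lemma M_norm v : 0 < La -> (forall v, dotv (M *m v) (M *m v) <= La^+2 * dotv v v) -> vnorm (M *m v) <= La * vnorm v.
Proof.
move=> L0 hMn; apply: vnorm_le.
  by apply: mulr_ge0; [exact: ltW | exact: vnorm_ge0].
by rewrite exprMn vnorm_sq; apply: hMn.
Qed.

Lemma Mdecomp v : M *m v = (La * dotv u v) *: u + M *m proj_uperp u v.
Proof. by rewrite {1}(decomp u v) mulmxDr -scalemxAr hMu scalerA mulrC. Qed.

Lemma perpM v : proj_uperp u (M *m v) = M *m proj_uperp u v.
Proof.
rewrite Mdecomp perpD (perp_u hu) add0r perp_u0 //.
by rewrite Mu_dot perp_dot // mulr0.
Qed.

Lemma Bf_uu (a b : R) v w : Bf M La (a *: u + v) (b *: u + w) = Bf M La v w.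
Proof.
rewrite /Bf !mulmxDr -!scalemxAr hMu !dotvDl !dotvDr !dotvZl !dotvZr.
rewrite (dotvC (M *m v) u) !Mu_dot (dotvC v u) hu.
ring.
Qed.

Lemma a_bounds x0 : vnorm x0 = 1 -> 0 <= dotv u x0 -> vnorm (proj_uperp u x0) <= nu ->
  1 - nu^+2 <= dotv u x0 /\ dotv u x0 <= 1.
Proof.
move=> hx ha hz.
have := pyth hu x0; rewrite -vnorm_sq hx expr1n -vnorm_sq.
have := sq_mono (vnorm_ge0 _) hz.
move: ha; generalize (dotv u x0) (vnorm (proj_uperp u x0)) => a t ha h1 h2.
split; nra.
Qed.

Lemma r_lower x0 : (forall v, vnorm (E *m v) <= th*La * vnorm v) ->
  vnorm x0 = 1 -> 1 - nu^+2 <= dotv u x0 -> 0 < La ->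
  La * (1 - nu^+2 - th) <= vnorm ((M + E) *m x0).
Proof.
move=> hE hx ha L0.
have e : dotv u ((M + E) *m x0) = La * dotv u x0 + dotv u (E *m x0) by rewrite mulmxDl dotvDr Mu_dot.
have h1 := dotu_le hu ((M + E) *m x0).
have h2 := dotu_le hu (E *m x0).
have h3 := hE x0; rewrite hx mulr1 in h3.
have h4 := ler_norm (dotv u ((M + E) *m x0)).
have h5 : - `|dotv u (E *m x0)| <= dotv u (E *m x0) by rewrite lerNl -normrN ler_norm.
rewrite e in h1 h4.
nra.
Qed.

Lemma Pperp_y x0 : 0 < La -> 0 <= l ->
  (forall z, dotv u z = 0 -> dotv (M *m z) (M *m z) <= (l*La)^+2 * dotv z z) ->
  (forall v, vnorm (E *m v) <= th*La * vnorm v) ->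
  vnorm x0 = 1 -> vnorm (proj_uperp u x0) <= nu ->
  vnorm (proj_uperp u ((M + E) *m x0)) <= l*La*nu + th*La.
Proof.
move=> L0 l0 hMp hE hx hz.
rewrite mulmxDl perpD perpM.
apply: (le_trans (vnorm_tri _ _)); apply: lerD.
  apply: (le_trans (Mperp_norm L0 l0 hMp (perp_dot hu x0))).
  by apply: ler_wpM2l => //; apply: mulr_ge0 => //; exact: ltW.
apply: (le_trans (vnorm_perp_le hu _)).
by have := hE x0; rewrite hx mulr1.
Qed.

Lemma main_vec :
  (forall v, dotv (M *m v) (M *m v) <= La^+2 * dotv v v) ->
  (forall z, dotv u z = 0 -> dotv (M *m z) (M *m z) <= (l*La)^+2 * dotv z z) ->
  (forall v, vnorm (E *m v) <= th*La * vnorm v) ->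
  0 < La -> 0 <= l -> l <= 1 -> 0 < th -> th <= 40^-1 -> nu <= 20^-1 ->
  vnorm x = 1 -> vnorm x' = 1 -> 0 <= dotv u x -> 0 <= dotv u x' ->
  vnorm (proj_uperp u x) <= nu -> vnorm (proj_uperp u x') <= nu ->
  let z := proj_uperp u x in let z' := proj_uperp u x' in
  let w := (vnorm ((M+E) *m x))^-1 *: ((M+E) *m x) - (vnorm ((M+E) *m x'))^-1 *: ((M+E) *m x') in
  vnorm (proj_uperp u w) <= (l * (1 + 3 * nu ^+ 2) + 3 * th) * vnorm (z - z') /\
  vnorm (proj_u u w) <= (4 * nu + 4 * th) * vnorm (z - z').
Proof.
move=> hMn hMp hE L0 l0 l1 t0 t1 n1 hx hx' ha ha' hz hz' z z' w; rewrite /w; clear w.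
have n0 : 0 <= nu by apply: le_trans hz; exact: vnorm_ge0.
have [a1 a2] := a_bounds hx ha hz.
have [a1' a2'] := a_bounds hx' ha' hz'.
have hr := r_lower hE hx a1 L0.
have hr' := r_lower hE hx' a1' L0.
have hP2 := Pperp_y L0 l0 hMp hE hx' hz'.
set a := dotv u x in a1 a2 hr ha; set a' := dotv u x' in a1' a2' hr' ha'.
set y := (M + E) *m x in hr *; set y' := (M + E) *m x' in hr' hP2 *.
set r := vnorm y in hr *; set r' := vnorm y' in hr' *.
have rp : 0 < r by apply: lt_le_trans hr; apply: mulr_gt0 => //; nra.
have rp' : 0 < r' by apply: lt_le_trans hr'; apply: mulr_gt0 => //; nra.
have hzu : dotv u z = 0 by exact: perp_dot.
have hzu' : dotv u z' = 0 by exact: perp_dot.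
have hxd : x = a *: u + z by exact: decomp.
have hxd' : x' = a' *: u + z' by exact: decomp.
set D := vnorm (z - z').
have D0 : 0 <= D by exact: vnorm_ge0.
have hzz : dotv z z = 1 - a^+2.
  by have := pyth hu x; rewrite -vnorm_sq hx expr1n -/a -/z; move=> ->; ring.
have hzz' : dotv z' z' = 1 - a'^+2.
  by have := pyth hu x'; rewrite -vnorm_sq hx' expr1n -/a' -/z'; move=> ->; ring.
move: hz hz'; rewrite -/z -/z' => hz hz'.
clearbody z z' a a'.
have hsz : vnorm (z + z') <= 2 * nu.
  by apply: (le_trans (vnorm_tri _ _)); lra.
have hdaa : (a - a') * (a + a') = - dotv (z - z') (z + z').
  rewrite dotvBl !dotvDr hzz hzz' (dotvC z' z); ring.
have hcs := cs (z - z') (z + z').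
have hda : `|a - a'| <= 101/100 * nu * D.
  have h1 : `|a - a'| * (a + a') <= D * (2 * nu).
    rewrite -(ger0_norm (_ : 0 <= a + a')); last by lra.
    rewrite -normrM hdaa normrN; apply: (le_trans hcs).
    by apply: ler_wpM2l.
  have h2 : 0 <= `|a - a'| := normr_ge0 _.
  have h3 : nu^+2 <= 1/400 by nra.
  nra.
have hdx : x - x' = (a - a') *: u + (z - z').
  by rewrite {1}hxd {1}hxd' scalerBl; rewrite opprD addrACA.
set X := vnorm (x - x').
have X0 : 0 <= X by exact: vnorm_ge0.
have hXX : dotv (x - x') (x - x') = (a - a')^+2 + D^+2.
  have hu0 : dotv u (z - z') = 0 by rewrite dotvBr hzu hzu' subrr.
  have pyth2 : forall (c : R) dz, dotv u dz = 0 -> dotv (c *: u + dz) (c *: u + dz) = c^+2 + dotv dz dz.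
    by move=> c dz h; rewrite dotvDl !dotvDr !dotvZl !dotvZr hu (dotvC dz u) h; ring.
  by rewrite hdx pyth2 // -vnorm_sq.
have hX : X <= 101/100 * D.
  apply: vnorm_le; first nra.
  rewrite hXX.
  have h2 : (a - a')^+2 <= (101/100 * nu * D)^+2.
    by rewrite -real_normK ?num_real //; apply: sq_mono => //; exact: normr_ge0.
  have h3 : nu^+2 <= 1/400 by nra.
  nra.
have hu0 : dotv u (z - z') = 0 by rewrite dotvBr hzu hzu' subrr.
have hEx := hE (x - x'); rewrite -/X in hEx.
have hpdx : proj_uperp u (x - x') = z - z'.
  by rewrite hdx perpD (perp_u hu) add0r perp_u0.
have hudx : dotv u (x - x') = a - a'.
  by rewrite hdx dotvDr dotvZr hu hu0 mulr1 addr0.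
have ey : y - y' = M *m (x - x') + E *m (x - x') by rewrite -mulmxDl mulmxBr.
have hLX : 0 <= th * La * X by apply: mulr_ge0 => //; apply: mulr_ge0; lra.
have hP1 : vnorm (proj_uperp u (y - y')) <= l*La*D + th*La*X.
  rewrite ey perpD perpM hpdx.
  apply: (le_trans (vnorm_tri _ _)); apply: lerD.
    exact: (Mperp_norm L0 l0 hMp hu0).
  exact: (le_trans (vnorm_perp_le hu _)).
have hU1 : `|dotv u (y - y')| <= La * (101/100 * nu * D) + th*La*X.
  rewrite ey dotvDr Mu_dot hudx.
  apply: (le_trans (ler_normD _ _)); apply: lerD.
    by rewrite normrM ger0_norm; [apply: ler_wpM2l => //; lra | lra].
  exact: (le_trans (dotu_le hu _)).
have hU2 : `|dotv u y'| <= r' by exact: dotu_le.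
have hsx : x + x' = (a + a') *: u + (z + z').
  by rewrite {1}hxd {1}hxd' scalerDl addrACA.
have es : y + y' = M *m (x + x') + E *m (x + x') by rewrite -mulmxDl mulmxDr.
have hxx : dotv (x - x') (x + x') = 0.
  rewrite dotvBl !dotvDr (dotvC x' x) -!vnorm_sq hx hx'; ring.
have hBf : `|Bf M La (x - x') (x + x')| <= La^+2 * (D * (2 * nu)).
  rewrite hdx hsx Bf_uu.
  apply: (le_trans (Bf_bound hMn _ _)); apply: ler_wpM2l; first exact: sqr_ge0.
  by apply: ler_wpM2l.
have hnsx : vnorm (x + x') <= 2 by apply: (le_trans (vnorm_tri _ _)); rewrite hx hx'; lra.
have hMdx : vnorm (M *m (x - x')) <= La * X by exact: M_norm.
have hEsx := hE (x + x').
have hT2 : `|dotv (M *m (x - x')) (E *m (x + x'))| <= La * X * (th * La * 2).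
  apply: (le_trans (cs _ _)); apply: ler_pM => //; try exact: vnorm_ge0.
  apply: (le_trans hEsx); apply: ler_wpM2l => //; apply: mulr_ge0; lra.
have hnyy : vnorm (y + y') <= r + r' by exact: vnorm_tri.
have hT3 : `|dotv (E *m (x - x')) (y + y')| <= th * La * X * (r + r').
  apply: (le_trans (cs _ _)); apply: ler_pM => //; exact: vnorm_ge0.
have hdot : (r - r') * (r + r') = - Bf M La (x - x') (x + x') + dotv (M *m (x - x')) (E *m (x + x'))
          + dotv (E *m (x - x')) (y + y').
  have e1 : (r - r') * (r + r') = dotv (y - y') (y + y').
    rewrite dotvBl !dotvDr (dotvC y' y) -!vnorm_sq; rewrite /r /r'; ring.
  rewrite e1 {1}ey dotvDl {1}es dotvDr /Bf hxx mulr0; ring.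
set K := `|r - r'|.
have K0 : 0 <= K := normr_ge0 _.
have hK : K * (r + r') <= 2*nu*La^+2*D + 2*th*La^+2*X + th*La*X*(r+r').
  have e : K * (r + r') = `|(r - r') * (r + r')| by rewrite normrM (ger0_norm (_ : 0 <= r + r')) //; lra.
  rewrite e hdot.
  apply: (le_trans (ler_normD _ _)).
  have := ler_normD (- Bf M La (x - x') (x + x')) (dotv (M *m (x - x'))  (E *m (x + x'))).
  rewrite normrN => h.
  nra.
have ew : r^-1 *: y - r'^-1 *: y' = r^-1 *: (y - y') + (r^-1 - r'^-1) *: y'.
  by rewrite scalerBr scalerBl addrA subrK.
have einv : `|r^-1 - r'^-1| = K / (r * r').
  have -> : r^-1 - r'^-1 = (r' - r) / (r * r') by field; apply/andP; split; apply: lt0r_neq0.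
  rewrite normrM [X in _ * X]ger0_norm; last by rewrite invr_ge0 mulr_ge0 // ltW.
  by rewrite /K distrC.
have hP10 : 0 <= vnorm (proj_uperp u (y - y')) := vnorm_ge0 _.
have hP20 : 0 <= vnorm (proj_uperp u y') := vnorm_ge0 _.
have hU10 : 0 <= `|dotv u (y - y')| := normr_ge0 _.
have hU20 : 0 <= `|dotv u y'| := normr_ge0 _.
have hri : 0 <= r^-1 by rewrite invr_ge0 ltW.
rewrite ew; split.
  rewrite perpD !perpZ.
  apply: (le_trans (vnorm_tri _ _)); rewrite !vnormZ einv (ger0_norm hri) mulrC.
  exact: (perp_final L0 l0 l1 n0 n1 t0 t1 D0 X0 hX hr hr' hP10 hP1 hP20 hP2 K0 hK).
rewrite vnorm_proj_u // dotvDr !dotvZr.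
apply: (le_trans (ler_normD _ _)); rewrite !normrM einv (ger0_norm hri) mulrC.
exact: (u_final L0 n0 n1 t0 t1 D0 X0 hX hr hr' hU10 hU1 hU20 hU2 K0 hK).
Qed.
End Main.

Unset Implicit Arguments. Set Strict Implicit.

Theorem lemma6p1 (R : realType) (n : nat) (M Q P : 'M[R]_n.+2) (d : 'rV[R]_n.+2)
  (u : 'cV[R]_n.+2) (theta nu : R) (x x' : 'cV[R]_n.+2) :
  M^T = M ->
  sorted_eigendecomp M P d ->
  0 < d ord0 ord0 ->
  `|d ord0 (lift ord0 ord0)| < d ord0 ord0 ->
  vnorm u = 1 -> M *m u = d ord0 ord0 *: u ->
  let lambda := d ord0 ord0 in
  let l2 := `|d ord0 (lift ord0 ord0)| / lambda in
  0 < theta -> theta <= 40^-1 * powR (1 - l2) (3 / 2) ->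
  opnorm (Q - M) <= theta * opnorm M ->
  nu <= 20^-1 ->
  vnorm x = 1 -> vnorm x' = 1 ->
  0 <= dotv u x -> 0 <= dotv u x' ->
  vnorm (proj_uperp u x) <= nu -> vnorm (proj_uperp u x') <= nu ->
  let z := proj_uperp u x in
  let z' := proj_uperp u x' in
  let w := (vnorm (Q *m x))^-1 *: (Q *m x) - (vnorm (Q *m x'))^-1 *: (Q *m x') in
  vnorm (proj_uperp u w) <= (l2 * (1 + 3 * nu ^+ 2) + 3 * theta) * vnorm (z - z') /\
  vnorm (proj_u u w) <= (4 * nu + 4 * theta) * vnorm (z - z').
Proof.
move=> hsym hed hd0 hd1 hun hMu lambda l2 t0 tp hop n1 hx hx' ha ha' hz hz'.
have hu : dotv u u = 1 by rewrite -vnorm_sq hun expr1n.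
have hMu' : M *m u = lambda *: u by [].
have L0 : 0 < lambda by [].
have l0 : 0 <= l2 by rewrite /l2 divr_ge0 // ltW.
have l1' : l2 < 1 by rewrite /l2 ltr_pdivrMr // mul1r.
have l1 : l2 <= 1 by apply: ltW.
have t1 : theta <= 40^-1.
  have hp : powR (1 - l2) (3/2) <= 1 - l2.
    by apply: ge1r_powR; [apply/andP; split; lra | lra].
  have : 0 <= powR (1 - l2) (3/2) := powR_ge0 _ _.
  nra.
have hMn : forall v, dotv (M *m v) (M *m v) <= lambda^+2 * dotv v v.
  by move=> v; exact: (Mn_le hed).
have hMp : forall z, dotv u z = 0 -> dotv (M *m z) (M *m z) <= (l2*lambda)^+2 * dotv z z.
  move=> z hz0.
  have -> : l2 * lambda = `|d ord0 (lift ord0 ord0)| by rewrite /l2 divfK // lt0r_neq0.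
  rewrite real_normK ?num_real //.
  exact: (Mperp_le hed hd0 hd1 hu hMu hz0).
have hopM : opnorm M <= lambda.
  apply: (opnorm_le hun) => v hv.
  apply: vnorm_le; first lra.
  by have := hMn v; rewrite -(vnorm_sq v) hv expr1n mulr1.
have hE : forall v, vnorm ((Q - M) *m v) <= theta*lambda * vnorm v.
  move=> v; apply: (le_trans (op_bound hun _ _)).
  apply: ler_wpM2r; first exact: vnorm_ge0.
  apply: (le_trans hop); apply: ler_wpM2l; lra.
have := main_vec hu hsym hMu' hMn hMp hE L0 l0 l1 t0 t1 n1 hx hx' ha ha' hz hz'.
by have -> : M + (Q - M) = Q by rewrite addrC subrK.
Qed.
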